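(* For every $n\ge2$, $$\sum_{T}\ \sum_{\{u,w\}\ni e_T} d(u,w)=\binom n2 c_{n-1}.$$ Here $T$ ranges over all plane trees on $n$ vertices, $e_T$ is the key edge of $T$, and $\{u,w\}$ ranges over unordered pairs of distinct vertices of $T$ whose connecting path contains $e_T$.
   Context: General (plane) trees are rooted trees in which each vertex may have any number of children, linearly ordered. The size of a tree is its number of vertices. The key edge of a plane tree with at least two vertices is the edge between the root and its leftmost (first) child. $d(u,w)$ is the number of edges of the path between $u$ and $w$. $c_{n-1}=\frac1n\binom{2n-2}{n-1}$ is the Catalan number. *)

(* Defs.v *)
From mathcomp Require Import all_boot.
From Stdlib Require List.
Set Implicit Arguments. Unset Strict Implicit. Unset Printing Implicit Defensive.

Inductive ptree : Type := Node of seq ptree.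

(* Vertices are identified with their addresses: the sequence of child indices
   (0 = leftmost child) on the path from the root. The root is [::]. *)
Fixpoint verts (t : ptree) : seq (seq nat) :=
  let: Node cs := t in
  [::] :: flatten
    ((fix aux (i : nat) (cs : seq ptree) : seq (seq (seq nat)) :=
        match cs with
        | [::] => [::]
        | c :: cs' => map (cons i) (verts c) :: aux i.+1 cs'
        end) 0 cs).

Definition ptsize (t : ptree) : nat := size (verts t).

(* longest common prefix of two addresses (= address of the lowest common ancestor) *)
Fixpoint lcp (u w : seq nat) : seq nat :=
  match u, w with
  | a :: u', b :: w' => if a == b then a :: lcp u' w' else [::]
  | _, _ => [::]
  end.

(* The path from u to w, as the sequence of vertices visited:
   up from u to the lowest common ancestor, then down to w. *)
Definition tpath (u w : seq nat) : seq (seq nat) :=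
  let k := size (lcp u w) in
  [seq take i u | i <- rev (iota k (size u - k).+1)] ++
  [seq take i w | i <- iota k.+1 (size w - k)].

Definition dist (u w : seq nat) : nat := (size (tpath u w)).-1.

Definition is_key_edge (e : seq nat * seq nat) : bool :=
  (e == ([::], [:: 0])) || (e == ([:: 0], [::])).

Definition path_has_key_edge (u w : seq nat) : bool :=
  let p := tpath u w in has is_key_edge (zip p (behead p)).

(* Vertices are listed (without repetition) by verts t, so an
   unordered pair of distinct vertices corresponds to a pair of indices i < j. *)
Definition key_dist_sum (t : ptree) : nat :=
  let V := verts t in
  \sum_(i < size V) \sum_(j < size V | i < j)
    (if path_has_key_edge (nth [::] V i) (nth [::] V j)
     then dist (nth [::] V i) (nth [::] V j) else 0).

Definition catalan (m : nat) : nat := 'C(m.*2, m) %/ m.+1.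

(* Main.v *)
Require Import Defs.
From HB Require Import structures.
From mathcomp Require Import all_boot all_algebra zify ring.
Set Implicit Arguments. Unset Strict Implicit. Unset Printing Implicit Defensive.

Definition s0 (u : seq nat) : bool := if u is 0 :: _ then true else false.
Definition ek (a b : seq nat) : bool := ~~ is_key_edge (a, b).

Lemma has_key_path (x : seq nat) s :
  has is_key_edge (zip (x :: s) s) = ~~ path ek x s.
Proof. by elim: s x => [|y s IH] x //=; rewrite IH /ek negb_and negbK. Qed.

Lemma path_nonempty (x : seq nat) (s : seq (seq nat)) : x != [::] -> all (fun y => y != [::]) s -> path ek x s.
Proof.
elim: s x => [|y s IH] x //= hx /andP[hy hs].
rewrite IH // andbT /ek /is_key_edge.
move: hx hy. case: x => [|a l] // _. case: y => [|b m] // _.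
by rewrite !xpair_eqE /= andbF.
Qed.

Lemma size_lcp u w : size (lcp u w) <= size u.
Proof. by elim: u w => [|a u IH] [|b w] //=; case: eqP => //= _; rewrite ltnS IH. Qed.
Lemma size_lcp2 u w : size (lcp u w) <= size w.
Proof. by elim: u w => [|a u IH] [|b w] //=; case: eqP => //= _; rewrite ltnS IH. Qed.

Lemma take_nonempty (u : seq nat) i : 0 < i -> u != [::] -> take i u != [::].
Proof. by case: i => // i _; case: u. Qed.

Lemma Hlast (u : seq nat) : last u [seq take i u | i <- rev (iota 0 (size u))] = [::].
Proof.
case: u => [|a u] //.
by rewrite -{1}(take_size (a :: u)) (last_map (fun i => take i (a :: u))) /= rev_cons last_rcons take0.
Qed.

Lemma HP (u : seq nat) : path ek u [seq take i u | i <- rev (iota 0 (size u))] = ~~ s0 u.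
Proof.
case: u => [|a u] //=.
rewrite rev_cons map_rcons rcons_path take0.
have -> : last (a :: u) [seq take i (a :: u) | i <- rev (iota 1 (size u))] = [:: a].
  rewrite -{1}(take_size (a :: u)) (last_map (fun i => take i (a :: u))) /=.
  case: (size u) => [|m] /=; first by rewrite take0.
  by rewrite rev_cons last_rcons /= ?take0.
rewrite path_nonempty //=; last first.
  apply/allP => x /mapP[i]; rewrite mem_rev mem_iota => /andP[hi _] ->.
  exact: take_nonempty.
by rewrite /ek /is_key_edge !xpair_eqE /=; case: a.
Qed.

Lemma HQ (w : seq nat) : path ek [::] [seq take i w | i <- iota 1 (size w)] = ~~ s0 w.
Proof.
case: w => [|b w] //=.
rewrite take0 path_nonempty //=; last first.
  apply/allP => x /mapP[i]; rewrite mem_iota => /andP[hi _] ->.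
  by case: i hi.
by rewrite andbT /ek /is_key_edge !xpair_eqE /=; case: b.
Qed.

Lemma pair_val u w :
  (if path_has_key_edge u w then dist u w else 0) =
  if s0 u != s0 w then size u + size w else 0.
Proof.
rewrite /path_has_key_edge /dist /tpath.
have Hku := size_lcp u w; have Hkw := size_lcp2 u w.
case: (posnP (size (lcp u w))) => hk.
-
  have hl : lcp u w = [::] by apply/size0nil.
  have Hs : (s0 u && s0 w) = false.
    by move: hl; case: u {Hku Hkw hk} => [|[|a] u] //; case: w => [|[|b] w].
  have -> : s0 u != s0 w = s0 u || s0 w.
    by move: Hs; case: (s0 u); case: (s0 w).
  rewrite hl /= !subn0.
  have -> : rev (iota 0 (size u).+1) = size u :: rev (iota 0 (size u)).
    by rewrite -addn1 iotaD rev_cat.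
  rewrite /= take_size has_key_path cat_path Hlast HP HQ negb_and !negbK.
  case: ifP => // _.
  by rewrite size_cat !size_map size_rev !size_iota.
-
  have Heq : s0 u = s0 w.
    move: hk; case: u {Hku Hkw} => [|a u] //; case: w => [|b w] //=.
    by case: eqP => // -> _.
  have hu : u != [::] by move: hk; case: u {Hku Hkw Heq}.
  have hw : w != [::] by move: hk; case: w {Hku Hkw Heq hu}; case: u.
  set k := size (lcp u w) in hk Hku Hkw *.
  have -> : rev (iota k (size u - k).+1) = size u :: rev (iota k (size u - k)).
    by rewrite -addn1 iotaD rev_cat /= subnKC.
  rewrite /= take_size has_key_path.
  rewrite Heq eqxx path_nonempty ?if_same //.
  rewrite all_cat; apply/andP; split; apply/allP => x /mapP[i];
    rewrite ?mem_rev mem_iota => /andP[hi _] ->; apply: take_nonempty => //.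
  exact: leq_trans hk hi.
  exact: leq_trans hk (ltnW hi).
Qed.

Definition shift (u : seq nat) : seq nat := if u is i :: x then i.+1 :: x else [::].
Fixpoint vaux (i : nat) (cs : seq ptree) : seq (seq (seq nat)) :=
  match cs with [::] => [::] | c :: cs' => map (cons i) (verts c) :: vaux i.+1 cs' end.
Lemma verts_node cs : verts (Node cs) = [::] :: flatten (vaux 0 cs).
Proof. by []. Qed.
Lemma vaux_shift i cs : vaux i.+1 cs = map (map shift) (vaux i cs).
Proof. by elim: cs i => [|c cs IH] i //=; rewrite IH -map_comp. Qed.
Definition Rv cs := flatten (vaux 0 cs).
Lemma verts_cons c cs :
  verts (Node (c :: cs)) = [::] :: map (cons 0) (verts c) ++ map shift (Rv cs).
Proof. by rewrite verts_node /= vaux_shift /Rv map_flatten. Qed.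

Definition Dt (t : ptree) : nat := \sum_(x <- verts t) size x.

Lemma sum_const_seq (T : Type) (s : seq T) (c : nat) : \sum_(x <- s) c = size s * c.
Proof. by elim: s => [|x s IH]; rewrite ?big_nil ?big_cons ?IH //= mulSn. Qed.

Lemma size_shift u : size (shift u) = size u.
Proof. by case: u. Qed.

Lemma ptsize_node cs : ptsize (Node cs) = (size (Rv cs)).+1.
Proof. by rewrite /ptsize verts_node. Qed.

Lemma ptsize_cons c cs : ptsize (Node (c :: cs)) = ptsize c + ptsize (Node cs).
Proof. by rewrite /ptsize verts_cons verts_node /= size_cat !size_map addnS. Qed.

Lemma sumA c : \sum_(x <- map (cons 0) (verts c)) size x = Dt c + ptsize c.
Proof. rewrite big_map; under eq_bigr do rewrite /= -addn1. by rewrite big_split /= sum_const_seq muln1. Qed.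

Lemma sumB cs : \sum_(x <- [::] :: map shift (Rv cs)) size x = Dt (Node cs).
Proof.
rewrite /Dt verts_node !big_cons big_map; congr (_ + _).
by apply: eq_bigr => x _; rewrite size_shift.
Qed.

Lemma Dt_cons c cs : Dt (Node (c :: cs)) = Dt c + ptsize c + Dt (Node cs).
Proof.
rewrite -(sumB cs) -(sumA c) {1}/Dt verts_cons !big_cons big_cat /=.
by rewrite add0n addnA.
Qed.

Definition gk (u w : seq nat) : nat := if s0 u != s0 w then size u + size w else 0.

Lemma half_sum (T : Type) (x0 : T) (V : seq T) (g : T -> T -> nat) :
  (forall x y, g x y = g y x) -> (forall x, g x x = 0) ->
  2 * (\sum_(i < size V) \sum_(j < size V | i < j) g (nth x0 V i) (nth x0 V j)) =
  \sum_(u <- V) \sum_(w <- V) g u w.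
Proof.
move=> gs g0.
transitivity (\sum_(i < size V) \sum_(j < size V) g (nth x0 V i) (nth x0 V j)); last first.
  rewrite (big_nth x0) big_mkord; apply: eq_bigr => i _.
  by rewrite (big_nth x0) big_mkord.
have pt : forall i j : 'I_(size V), g (nth x0 V i) (nth x0 V j) =
   (if i < j then g (nth x0 V i) (nth x0 V j) else 0) +
   (if j < i then g (nth x0 V j) (nth x0 V i) else 0).
  move=> i j; case: ltngtP => h; [by rewrite addn0 | by rewrite add0n gs | by rewrite h g0].
rewrite [RHS](_ : _ = \sum_(i < size V) \sum_(j < size V) (if i < j then g (nth x0 V i) (nth x0 V j) else 0) +
   \sum_(i < size V) \sum_(j < size V) (if j < i then g (nth x0 V j) (nth x0 V i) else 0)); last first.
  rewrite -big_split; apply: eq_bigr => i _; rewrite -big_split; apply: eq_bigr => j _; exact: pt.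
rewrite [X in _ + X]exchange_big /= mul2n -addnn.
by congr (_ + _); apply: eq_bigr => i _; rewrite big_mkcond.
Qed.

Lemma kds_sym t : 2 * key_dist_sum t = \sum_(u <- verts t) \sum_(w <- verts t) gk u w.
Proof.
rewrite -(half_sum [::]); last 2 first.
- by move=> x y; rewrite /gk eq_sym addnC.
- by move=> x; rewrite /gk eqxx.
rewrite /key_dist_sum; congr (2 * _); apply: eq_bigr => i _; apply: eq_bigr => j _.
exact: pair_val.
Qed.

Lemma sum_gk (V : seq (seq nat)) :
  \sum_(u <- V) \sum_(w <- V) gk u w =
  2 * \sum_(u <- V | s0 u) \sum_(w <- V | ~~ s0 w) (size u + size w).
Proof.
have pt : forall u w, gk u w = (if s0 u && ~~ s0 w then size u + size w else 0)
   + (if s0 w && ~~ s0 u then size w + size u else 0).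
  by move=> u w; rewrite /gk; case: (s0 u); case: (s0 w); rewrite /= ?addn0 ?add0n // addnC.
under eq_bigr do under eq_bigr do rewrite pt.
under eq_bigr do rewrite big_split /=.
rewrite big_split /= [X in _ + X]exchange_big /= mul2n -addnn.
have E : \sum_(u <- V) \sum_(w <- V) (if s0 u && ~~ s0 w then size u + size w else 0)
  = \sum_(u <- V | s0 u) \sum_(w <- V | ~~ s0 w) (size u + size w).
  rewrite [RHS]big_mkcond; apply: eq_bigr => u _; case: (s0 u) => /=.
  - by rewrite [RHS]big_mkcond.
  - by rewrite big1.
by rewrite E.
Qed.

Lemma sum_filter_all (T : Type) (P : pred T) (s : seq T) (F : T -> nat) :
  all P s -> \sum_(u <- s | P u) F u = \sum_(u <- s) F u.
Proof. elim: s => [|x s IH] /=; first by rewrite !big_nil. by move=> /andP[px ps]; rewrite !big_cons px IH. Qed.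
Lemma sum_filter_none (T : Type) (P : pred T) (s : seq T) (F : T -> nat) :
  all (predC P) s -> \sum_(u <- s | P u) F u = 0.
Proof. by elim: s => [|x s IH] /=; rewrite ?big_nil // big_cons => /andP[/negbTE -> ps]; rewrite IH. Qed.

Lemma sum_pairs (A B : seq (seq nat)) :
  \sum_(u <- A) \sum_(w <- B) (size u + size w) =
  size B * \sum_(u <- A) size u + size A * \sum_(w <- B) size w.
Proof.
under eq_bigr do rewrite big_split /= sum_const_seq.
by rewrite big_split /= big_distrr /= sum_const_seq mulnC.
Qed.

Lemma s0_shift (u : seq nat) : s0 (shift u) = false.
Proof. by case: u. Qed.

Lemma kds_cons c cs :
  key_dist_sum (Node (c :: cs)) = ptsize (Node cs) * (Dt c + ptsize c) + ptsize c * Dt (Node cs).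
Proof.
apply/eqP; rewrite -(eqn_pmul2l (isT : 0 < 2)) kds_sym sum_gk; apply/eqP; congr (2 * _).
have hA : all s0 (map (cons 0) (verts c)) by apply/allP => x /mapP[y _ ->].
have hB : all (predC s0) (map shift (Rv cs)) by apply/allP => x /mapP[y _ ->]; rewrite /= s0_shift.
have hA' : all (predC (fun w => ~~ s0 w)) (map (cons 0) (verts c)) by apply/allP => x /mapP[y _ ->].
have hB' : all (fun w => ~~ s0 w) (map shift (Rv cs)) by apply/allP => x /mapP[y _ ->]; rewrite /= s0_shift.
rewrite verts_cons big_cons /= big_cat /= sum_filter_all // (sum_filter_none _ hB) addn0.
have inner : forall F : seq nat -> nat,
    \sum_(w <- [::] :: map (cons 0) (verts c) ++ map shift (Rv cs) | ~~ s0 w) F w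
    = \sum_(w <- [::] :: map shift (Rv cs)) F w.
  move=> F; rewrite !big_cons /= big_cat /= (sum_filter_none _ hA') sum_filter_all //.
under eq_bigr do rewrite inner.
rewrite sum_pairs sumA sumB /= size_map ptsize_node size_map.
by rewrite /ptsize.
Qed.

Lemma Dt_leaf : Dt (Node [::]) = 0.
Proof. by rewrite /Dt verts_node big_cons big_nil. Qed.
Lemma kds_leaf : key_dist_sum (Node [::]) = 0.
Proof.
apply/eqP; rewrite -(eqn_pmul2l (isT : 0 < 2)) kds_sym verts_node /= muln0.
by rewrite !big_cons !big_nil.
Qed.

Fixpoint enc (t : ptree) : GenTree.tree unit :=
  let: Node cs := t in GenTree.Node 0 (map enc cs).
Fixpoint dec (g : GenTree.tree unit) : ptree :=
  match g with GenTree.Leaf _ => Node [::] | GenTree.Node _ gs => Node (map dec gs) end.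
Fixpoint ptree_ind2 (P : ptree -> Prop) (IH : forall cs, List.Forall P cs -> P (Node cs))
  (t : ptree) : P t :=
  let: Node cs := t in IH cs ((fix F (l : seq ptree) : List.Forall P l :=
     match l with [::] => List.Forall_nil _
     | c :: l' => List.Forall_cons c (ptree_ind2 IH c) (F l') end) cs).
Lemma encK : cancel enc dec.
Proof.
elim/ptree_ind2 => cs IH /=; congr Node; elim: IH => //= c l Hc _ ->; by rewrite Hc.
Qed.
HB.instance Definition _ := Equality.copy ptree (can_type encK).

Lemma Node_inj : injective Node.
Proof. by move=> x y []. Qed.

Fixpoint FS (k : nat) : seq (seq ptree) :=
  if k is k'.+1 then [::] :: [seq Node f :: g | f <- FS k', g <- FS k'] else [::].

Lemma psz_cons f1 g :
  (size (Rv (Node f1 :: g))).+1 = (size (Rv f1)).+1 + (size (Rv g)).+1.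
Proof. by have := ptsize_cons (Node f1) g; rewrite !ptsize_node. Qed.

Lemma FS_mem k f : size (Rv f) < k -> f \in FS k.
Proof.
elim: k f => // k IH [|[f1] g] h /=; first by rewrite in_cons eqxx.
rewrite in_cons; apply/orP; right.
have e := psz_cons f1 g.
apply: (allpairs_f (fun f g => Node f :: g)); apply: IH; lia.
Qed.

Lemma FS_uniq k : uniq (FS k).
Proof.
elim: k => //= k IH; apply/andP; split.
  by apply/negP => /allpairsP [[? ?] [_ _]].
apply: allpairs_uniq => // [[a b]] [a' b'] _ _ /= [-> ->] //.
Qed.

Definition L (m : nat) : seq ptree := [seq t <- map Node (FS m) | ptsize t == m].

Lemma L_uniq m : uniq (L m).
Proof. by rewrite filter_uniq // map_inj_uniq ?FS_uniq //; exact: Node_inj. Qed.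

Lemma mem_L m t : (t \in L m) = (ptsize t == m).
Proof.
rewrite mem_filter; case: eqP => //= h; case: t h => f h.
rewrite mem_map; last exact: Node_inj.
by apply: FS_mem; rewrite ptsize_node in h; lia.
Qed.

Lemma sum_L (s : seq ptree) m F :
  uniq s -> (forall t, (t \in s) = (ptsize t == m)) ->
  \sum_(t <- s) F t = \sum_(t <- L m) F t.
Proof.
move=> us hs; apply: perm_big; apply: uniq_perm => //; first exact: L_uniq.
by move=> t; rewrite hs mem_L.
Qed.

Lemma sum_L_FS a k F : a <= k ->
  \sum_(t <- L a) F t = \sum_(f <- FS k) (if ptsize (Node f) == a then F (Node f) else 0).
Proof.
move=> hak; symmetry.
rewrite -big_mkcond -(big_map Node (fun t => ptsize t == a) F) -big_filter.
apply: sum_L; first by rewrite filter_uniq // map_inj_uniq ?FS_uniq //; exact: Node_inj.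
move=> t; rewrite mem_filter; case: eqP => //= h; case: t h => f h.
rewrite mem_map; last exact: Node_inj.
by apply: FS_mem; rewrite ptsize_node in h; lia.
Qed.

Definition Gof (H : ptree -> ptree -> nat) (t : ptree) : nat :=
  match t with Node (c :: cs) => H c (Node cs) | _ => 0 end.

Lemma sum_ind m x (v : nat -> nat) : x < m ->
  \sum_(a < m) (if x == a then v a else 0) = v x.
Proof.
move=> h; rewrite (bigD1 (Ordinal h)) //= eqxx big1 ?addn0 // => i hi.
case: eqP => // e; move: hi; rewrite -val_eqE /= -e eqxx //.
Qed.

Lemma decomp n H :
  \sum_(t <- L n) Gof H t = \sum_(a < n) \sum_(c <- L a) \sum_(t' <- L (n - a)) H c t'.
Proof.
case: n => [|k]; first by rewrite big_ord0 /L /= big_nil.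
rewrite /L big_filter big_map /= big_cons /= add0n if_same big_mkcond big_allpairs_dep /=.
transitivity (\sum_(f1 <- FS k) \sum_(a < k.+1) (if ptsize (Node f1) == a then
   \sum_(g <- FS k) (if ptsize (Node g) == k.+1 - a then H (Node f1) (Node g) else 0) else 0)).
  apply: eq_bigr => f1 _.
  case: (ltnP (ptsize (Node f1)) k.+1) => hf1; last first.
    rewrite [RHS]big1; last by move=> a _; case: eqP => // e; have := ltn_ord a; lia.
    rewrite big1 // => g _; rewrite ptsize_cons; case: eqP => // e.
    have : 0 < ptsize (Node g) by rewrite ptsize_node.
    lia.
  rewrite (@sum_ind _ _ (fun a => \sum_(g <- FS k) (if ptsize (Node g) == k.+1 - a then H (Node f1) (Node g) else 0))) //.
  apply: eq_bigr => g _; rewrite ptsize_cons.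
  have -> : (ptsize (Node f1) + ptsize (Node g) == k.+1) = (ptsize (Node g) == k.+1 - ptsize (Node f1)).
    by apply/eqP/eqP; lia.
  by [].
rewrite exchange_big /=; apply: eq_bigr => a _.
rewrite (@sum_L_FS _ k); last by have := ltn_ord a.
apply: eq_bigr => f1 _; case: eqP => // h.
rewrite (@sum_L_FS _ k) //.
have : 0 < ptsize (Node f1) by rewrite ptsize_node.
lia.
Qed.

Definition cnt m := size (L m).
Definition Ds m := \sum_(t <- L m) Dt t.
Definition Ts m := \sum_(t <- L m) key_dist_sum t.
Arguments L : simpl never.
Arguments cnt : simpl never.
Arguments Ds : simpl never.
Arguments Ts : simpl never.

Lemma sum_L_sz a (F : nat -> ptree -> nat) :
  \sum_(c <- L a) F (ptsize c) c = \sum_(c <- L a) F a c.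
Proof. by apply: eq_big_seq => c; rewrite mem_L => /eqP ->. Qed.

Lemma sum_eq_count (s : seq ptree) x : \sum_(t <- s) (t == x) = count_mem x s.
Proof. by elim: s => [|y s IH]; rewrite ?big_nil ?big_cons ?IH. Qed.

Lemma cnt_rec n : cnt n = (n == 1) + \sum_(a < n) cnt a * cnt (n - a).
Proof.
have pt : forall t, 1 = (t == Node [::]) + Gof (fun _ _ => 1) t.
  case=> [[|c cs]]; first by rewrite eqxx.
  have : Node (c :: cs) != Node [::] by apply/eqP => -[].
  by move/negbTE ->.
rewrite /cnt -[size (L n)]muln1 -sum_const_seq (eq_bigr _ (fun t _ => pt t)) big_split /=.
rewrite sum_eq_count count_uniq_mem ?L_uniq // mem_L ptsize_node /= eq_sym decomp.
congr (_ + _); apply: eq_bigr => a _.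
under eq_bigr do rewrite sum_const_seq.
by rewrite sum_const_seq muln1.
Qed.

Lemma Ds_rec n : Ds n = \sum_(a < n) (cnt (n - a) * (Ds a + a * cnt a) + cnt a * Ds (n - a)).
Proof.
have pt : forall t, Dt t = Gof (fun c t' => Dt c + ptsize c + Dt t') t.
  by case=> [[|c cs]]; [exact: Dt_leaf | exact: Dt_cons].
rewrite /Ds (eq_bigr _ (fun t _ => pt t)) decomp; apply: eq_bigr => a _.
rewrite (sum_L_sz a (fun s c => \sum_(t' <- L (n - a)) (Dt c + s + Dt t'))).
under eq_bigr do rewrite big_split /= sum_const_seq.
rewrite big_split /= sum_const_seq -big_distrr /= big_split /= sum_const_seq /cnt.
ring.
Qed.

Lemma Ts_rec n : Ts n =
  \sum_(a < n) ((n - a) * cnt (n - a) * (Ds a + a * cnt a) + a * cnt a * Ds (n - a)).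
Proof.
have pt : forall t, key_dist_sum t =
    Gof (fun c t' => ptsize t' * (Dt c + ptsize c) + ptsize c * Dt t') t.
  by case=> [[|c cs]]; [exact: kds_leaf | exact: kds_cons].
rewrite /Ts (eq_bigr _ (fun t _ => pt t)) decomp; apply: eq_bigr => a _.
rewrite (sum_L_sz a (fun s c => \sum_(t' <- L (n - a)) (ptsize t' * (Dt c + s) + s * Dt t'))).
under eq_bigr do rewrite (sum_L_sz (n - a) (fun s t' => s * (Dt _ + a) + a * Dt t')).
under eq_bigr do rewrite big_split /= sum_const_seq -big_distrr /=.
rewrite big_split /= sum_const_seq -big_distrr /= -big_distrr /= big_split /= sum_const_seq /cnt /Ds.
ring.
Qed.

Lemma L0 : L 0 = [::]. Proof. by []. Qed.
Lemma cnt0 : cnt 0 = 0. Proof. by []. Qed.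
Lemma Ds0 : Ds 0 = 0. Proof. by rewrite /Ds L0 big_nil. Qed.
Lemma Ts0 : Ts 0 = 0. Proof. by rewrite /Ts L0 big_nil. Qed.

Unset Implicit Arguments.
Import GRing.Theory Num.Theory.
Local Open Scope ring_scope.

Definition pf (N : nat) (f : nat -> nat) : {poly int} := \poly_(i < N) (f i)%:R.
Definition eqm (K : nat) (p q : {poly int}) := forall i, (i < K)%N -> p`_i = q`_i.

Lemma coef_pf N f i : (pf N f)`_i = if (i < N)%N then (f i)%:R else 0.
Proof. by rewrite /pf coef_poly. Qed.

Lemma eqmR {K} p : eqm K p p. Proof. by []. Qed.
Lemma eqmS {K p q} : eqm K p q -> eqm K q p. Proof. by move=> h i hi; rewrite h. Qed.
Lemma eqmT {K p q r} : eqm K p q -> eqm K q r -> eqm K p r.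
Proof. by move=> h1 h2 i hi; rewrite h1 // h2. Qed.
Lemma eqm_eq {K p q} : p = q -> eqm K p q. Proof. by move=> ->. Qed.
Lemma eqmW {K K' p q} : (K' <= K)%N -> eqm K p q -> eqm K' p q.
Proof. by move=> hK h i hi; apply: h; exact: leq_trans hi hK. Qed.
Lemma eqmD {K p p' q q'} : eqm K p p' -> eqm K q q' -> eqm K (p + q) (p' + q').
Proof. by move=> h1 h2 i hi; rewrite !coefD h1 // h2. Qed.
Lemma eqmN {K p p'} : eqm K p p' -> eqm K (- p) (- p').
Proof. by move=> h i hi; rewrite !coefN h. Qed.
Lemma eqmMn {K p p'} n : eqm K p p' -> eqm K (p *+ n) (p' *+ n).
Proof. by move=> h i hi; rewrite !coefMn h. Qed.
Lemma eqmM {K p p' q q'} : eqm K p p' -> eqm K q q' -> eqm K (p * q) (p' * q').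
Proof.
move=> h1 h2 i hi; rewrite !coefM; apply: eq_bigr => j _.
have hj : (j < K)%N by apply: leq_ltn_trans hi; rewrite -ltnS.
have hij : (i - j < K)%N by apply: leq_ltn_trans hi; exact: leq_subr.
by rewrite h1 // h2.
Qed.
Lemma eqm_deriv {K p q} : eqm K.+1 p q -> eqm K p^`() q^`().
Proof. by move=> h i hi; rewrite !coef_deriv h. Qed.
Lemma eqm_mulX {K p q} : eqm K p q -> eqm K.+1 ('X * p) ('X * q).
Proof. by move=> h [|i] hi; rewrite !coefXM //= h. Qed.

Lemma deriv1' : (1 : {poly int})^`() = 0.
Proof. by rewrite -polyC1 derivC. Qed.

Lemma A12 {K C} : eqm K.+1 C ('X + C * C) ->
  eqm K C^`() (1 + C * C^`() *+ 2) /\ eqm K (C^`() * (1 - C *+ 2)) 1.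
Proof.
move=> H1.
have A1 : eqm K C^`() (1 + C * C^`() *+ 2).
  apply: eqmT (eqm_deriv H1) _; apply: eqm_eq; rewrite derivD derivX derivM; ring.
split => //.
have -> : C^`() * (1 - C *+ 2) = C^`() + - (C * C^`() *+ 2) by ring.
apply: eqmT (eqmD A1 (eqmR _)) _; apply: eqm_eq; ring.
Qed.

Lemma alg K (C D T P : {poly int}) :
  eqm K.+2 C ('X + C * C) -> eqm K.+2 D (D * C + P * C + C * D) ->
  eqm K.+2 T (D * P + P * P + P * D) -> eqm K.+2 P ('X * C^`()) ->
  eqm K (T *+ 2) ('X * ('X * C^`()^`())).
Proof.
move=> H1 H2 H3 H4.
have [A1 A2] := A12 H1.
set Cp := C^`() in A1 A2 *; set E := 1 - C *+ 2 in A2 *.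
have D1 : eqm K.+2 (D * E) (P * C).
  have -> : D * E = D + - (C * D *+ 2) by rewrite /E; ring.
  apply: eqmT (eqmD H2 (eqmR _)) _; apply: eqm_eq; ring.
have D2 : eqm K.+1 D (P * C * Cp).
  apply: eqmT (eqm_eq (_ : D = D * 1)) _; first by ring.
  apply: eqmT (eqmM (eqmR D) (eqmS A2)) _.
  apply: eqmT (eqm_eq (_ : D * (Cp * E) = (D * E) * Cp)) _; first by ring.
  exact: eqmM (eqmW (leqnSn _) D1) (eqmR _).
have T1 : eqm K.+1 T (P * P * Cp).
  apply: eqmT (eqmW (leqnSn _) H3) _.
  apply: eqmT (eqmD (eqmD (eqmM D2 (eqmR P)) (eqmR _)) (eqmM (eqmR P) D2)) _.
  apply: eqmT (eqm_eq (_ : _ = P * P * (1 + C * Cp *+ 2))) _; first by ring.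
  exact: eqmM (eqmR _) (eqmS A1).
have T2 : eqm K.+1 T ('X * Cp * ('X * Cp) * Cp).
  apply: eqmT T1 _; have H4' := eqmW (leqnSn _) H4.
  exact: eqmM (eqmM H4' H4') (eqmR _).
have [A1' A2'] := A12 (eqmW (leqnSn _) H1).
have A3 : eqm K Cp^`() (Cp * Cp *+ 2 + C * Cp^`() *+ 2).
  apply: eqmT (eqm_deriv A1) _; apply: eqm_eq.
  by rewrite derivD deriv1' derivMn derivM; ring.
have A4 : eqm K Cp^`() (Cp * Cp * Cp *+ 2).
  apply: eqmT (eqm_eq (_ : Cp^`() = Cp^`() * 1)) _; first by ring.
  apply: eqmT (eqmM (eqmR _) (eqmS A2')) _.
  apply: eqmT (eqm_eq (_ : _ = Cp * (Cp^`() + - (C * Cp^`() *+ 2)))) _; first by rewrite /E; ring.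
  apply: eqmT (eqmM (eqmR Cp) (eqmD A3 (eqmR _))) _.
  apply: eqm_eq; ring.
apply: eqmT (eqmMn 2 (eqmW (leqnSn _) T2)) _.
apply: eqmS; apply: eqmT (eqmW (leqnSn _ ) (eqmW (leqnSn _) (eqm_mulX (eqm_mulX A4)))) _.
apply: eqm_eq; ring.
Qed.

Lemma alg_cat K (C : {poly int}) :
  eqm K.+1 C ('X + C * C) -> eqm K (C^`() + C *+ 2) (1 + ('X * C^`()) *+ 4).
Proof.
move=> H1.
have [A1 A2] := A12 H1.
set Cp := C^`() in A1 A2 *; set E := 1 - C *+ 2 in A2 *.
have E2 : eqm K.+1 (E * E) (1 - 'X *+ 4).
  have -> : E * E = 1 + - (C *+ 4) + C * C *+ 4 by rewrite /E; ring.
  apply: eqmT (eqmD (eqmD (eqmR 1) (eqmN (eqmMn 4 H1))) (eqmR _)) _.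
  apply: eqm_eq; ring.
have F1 : eqm K ((1 - 'X *+ 4) * Cp) E.
  apply: eqmT (eqmM (eqmS (eqmW (leqnSn _) E2)) (eqmR Cp)) _.
  apply: eqmT (eqm_eq (_ : _ = E * (Cp * E))) _; first by ring.
  apply: eqmT (eqmM (eqmR E) A2) _; apply: eqm_eq; ring.
apply: eqmT (eqm_eq (_ : _ = (1 - 'X *+ 4) * Cp + ('X * Cp) *+ 4 + C *+ 2)) _; first by ring.
apply: eqmT (eqmD (eqmD F1 (eqmR _)) (eqmR _)) _.
apply: eqm_eq; rewrite /E; ring.
Qed.

Lemma conv N f g n : (n < N)%N -> g 0%N = 0%N ->
  ((pf N f) * (pf N g))`_n = (\sum_(a < n) f a * g (n - a))%:R.
Proof.
move=> hn g0; have h0 : (0 < N)%N by apply: leq_ltn_trans hn.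
rewrite coefM big_ord_recr /= subnn [X in _ * X]coef_pf h0 g0 mulr0 addr0 natr_sum.
apply: eq_bigr => a _; rewrite !coef_pf natrM.
have ha : (a < N)%N by apply: ltn_trans hn.
have hb : (n - a < N)%N by apply: leq_ltn_trans hn; exact: leq_subr.
by rewrite ha hb.
Qed.

Definition Cq N := pf N cnt.
Definition Dq N := pf N Ds.
Definition Tq N := pf N Ts.
Definition Pq N := pf N (fun m => m * cnt m)%N.

Lemma H1 N : eqm N (Cq N) ('X + Cq N * Cq N).
Proof.
move=> i hi; rewrite coefD coefX conv // /Cq coef_pf hi -natrD.
by rewrite -cnt_rec.
Qed.

Lemma H2 N : eqm N (Dq N) (Dq N * Cq N + Pq N * Cq N + Cq N * Dq N).
Proof.
move=> i hi; rewrite !coefD !conv // ?Ds0 // /Dq coef_pf hi -!natrD Ds_rec.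
by rewrite -!big_split /=; congr (_%:R); apply: eq_bigr => a _; ring.
Qed.

Lemma H3 N : eqm N (Tq N) (Dq N * Pq N + Pq N * Pq N + Pq N * Dq N).
Proof.
move=> i hi; rewrite !coefD !conv // ?Ds0 // /Tq coef_pf hi -!natrD Ts_rec.
by rewrite -!big_split /=; congr (_%:R); apply: eq_bigr => a _; ring.
Qed.

Lemma H4 N : eqm N (Pq N) ('X * (Cq N)^`()).
Proof.
move=> [|i] hi; rewrite coefXM /Pq coef_pf hi //= coef_deriv /Cq coef_pf hi.
by rewrite mulnC natrM mulr_natr.
Qed.

Lemma natr_mulrn (a k : nat) : (a%:R : int) *+ k = (a * k)%:R.
Proof. by rewrite natrM mulr_natr. Qed.

Lemma T_val m : (2 * Ts m.+2 = cnt m.+2 * m.+2 * m.+1)%N.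
Proof.
have := alg m.+3 _ _ _ _ (H1 _) (H2 _) (H3 _) (H4 _) m.+2 (ltnSn _).
have h : (m.+2 < m.+1.+4)%N by lia.
rewrite coefMn /Tq coef_pf h !coefXM /= !coef_deriv /Cq coef_pf h.
move/eqP; rewrite !natr_mulrn eqr_nat => /eqP hh.
by rewrite mulnC hh.
Qed.

Lemma cat_rec j : (cnt j.+2 * j.+2 + cnt j.+1 * 2 = cnt j.+1 * j.+1 * 4)%N.
Proof.
have := alg_cat j.+2 _ (H1 _) j.+1 (ltnSn _).
have h1 : (j.+2 < j.+3)%N by lia.
have h2 : (j.+1 < j.+3)%N by lia.
rewrite !coefD coef1 !coefXM /= !coef_deriv /Cq !coef_pf h1 h2.
move/eqP; rewrite !natr_mulrn -!natrD eqr_nat => /eqP hh.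
nia.
Qed.

Local Close Scope ring_scope.

Lemma cnt1 : cnt 1 = 1.
Proof. by rewrite cnt_rec big_ord1 cnt0. Qed.

Lemma bin_fact m : m.+1 * 'C((m.+1).*2, m.+1) = (4 * m + 2) * 'C(m.*2, m).
Proof.
have h1 := mul_bin_diag (m.+1).*2 m.
have h2 := mul_bin_diag (m.*2).+1 m.
have h3 : 'C((m.*2).+1, m) = 'C((m.*2).+1, m.+1).
  rewrite -bin_sub; last by lia.
  by congr 'C(_, _); lia.
rewrite doubleS /= in h1.
rewrite h3 in h1.
rewrite doubleS; move: h1 h2; rewrite -!mul2n /=; nia.
Qed.

Lemma cnt_cat m : cnt m.+1 * m.+1 = 'C(m.*2, m).
Proof.
elim: m => [|m IH]; first by rewrite cnt1.
have r := cat_rec m.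
apply/eqP; rewrite -(eqn_pmul2l (ltn0Sn m)); apply/eqP.
rewrite bin_fact -IH.
nia.
Qed.

Lemma bin2_2 n : 'C(n, 2) * 2 = n * n.-1.
Proof.
elim: n => [|n IH] //.
rewrite binS bin1 mulnDl IH /=; case: n {IH} => [|n] //=; lia.
Qed.

Lemma In_mem (s : seq ptree) x : List.In x s <-> x \in s.
Proof.
elim: s => [|y s IH] //=; rewrite in_cons; split.
- by case=> [->|/IH ->]; rewrite ?eqxx ?orbT.
- by case/orP => [/eqP ->|/IH]; [left | right].
Qed.

Lemma NoDup_uniq (s : seq ptree) : List.NoDup s -> uniq s.
Proof.
elim => //= x l hx _ ->; rewrite andbT; apply/negP => /In_mem; exact: hx.
Qed.

Theorem proposition3p2 (n : nat) (trees_n : seq ptree) :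
  2 <= n ->
  List.NoDup trees_n ->
  (forall t : ptree, List.In t trees_n <-> ptsize t = n) ->
  \sum_(t <- trees_n) key_dist_sum t = 'C(n, 2) * catalan n.-1.
Proof.
move=> hn hnd hin.
rewrite (@sum_L _ n); last first.
- by move=> t; apply/idP/eqP => [/In_mem/hin|/hin/In_mem].
- exact: NoDup_uniq.
case: n hn {hin} => [|[|m]] // _.
rewrite -/(Ts m.+2) /catalan /=.
have hc := cnt_cat m.+1.
rewrite -hc mulnK //.
have ht := T_val m.
have hb := bin2_2 m.+2.
rewrite /= in hb.
nia.
Qed.
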